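(* Let $C_0\ge1$. There exists a constant $C_1=C_1(C_0)\ge1$ such that for all $x_1,x_2>0$ and $\kappa_1,\kappa_2\in(0,1)$ satisfying $$\frac{x_1}{x_2},\ \frac{\kappa_1}{\kappa_2},\ \frac{1-\kappa_1}{1-\kappa_2}\in\Big[\frac1{C_0},C_0\Big],$$ we have $$\frac1{C_1}\le\frac{H_{\kappa_1}(x_1)-1}{H_{\kappa_2}(x_2)-1}\le C_1.$$
   Context: For $\kappa\in(0,1)$ let $G_\kappa:[1,\infty)\to[0,\infty)$, $G_\kappa(x)=\sqrt{x^2-1}-\kappa\ln(x+\sqrt{x^2-1})$ (a strictly increasing bijection) and $H_\kappa=G_\kappa^{-1}:[0,\infty)\to[1,\infty)$. *)

(* Defs.v *)
From Stdlib Require Import Reals Lra ClassicalEpsilon.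
Open Scope R_scope.

Definition G (kappa x : R) : R :=
  sqrt (x ^ 2 - 1) - kappa * ln (x + sqrt (x ^ 2 - 1)).

(* H_kappa = G_kappa^{-1} : [0,oo) -> [1,oo): the (unique, since G_kappa is a
   strictly increasing bijection [1,oo) -> [0,oo) for kappa in (0,1))
   x >= 1 with G_kappa x = y, chosen by Hilbert's epsilon. *)
Definition H (kappa y : R) : R :=
  epsilon (inhabits 1) (fun x => 1 <= x /\ G kappa x = y).

(* Main.v *)
Require Import Defs.
From Stdlib Require Import Reals Lra ClassicalEpsilon.
From Coquelicot Require Import Coquelicot.
Open Scope R_scope.

Lemma mono (f df : R -> R) (a b : R) : a <= b ->
  (forall x, a <= x <= b -> is_derive f x (df x)) ->
  (forall x, a <= x <= b -> 0 <= df x) -> f a <= f b.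
Proof.
  intros Hab Hd Hp.
  destruct (MVT_gen f a b df) as [c [Hc Heq]].
  - intros x Hx. apply Hd. rewrite Rmin_left in Hx by lra. rewrite Rmax_right in Hx by lra. lra.
  - intros x Hx. rewrite Rmin_left in Hx by lra. rewrite Rmax_right in Hx by lra.
    apply derivable_continuous_pt. exists (df x). apply is_derive_Reals. apply Hd. lra.
  - rewrite Rmin_left in Hc by lra. rewrite Rmax_right in Hc by lra.
    assert (0 <= df c * (b - a)) by (apply Rmult_le_pos; [apply Hp; lra | lra]). lra.
Qed.

Lemma eprod u : exp u * exp (- u) = 1.
Proof. rewrite exp_Ropp. field. apply Rgt_not_eq, exp_pos. Qed.

Lemma ch_sh u : cosh u * cosh u - sinh u * sinh u = 1.
Proof. unfold cosh, sinh. pose proof (eprod u). nra. Qed.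

Lemma ch_ge1 u : 1 <= cosh u.
Proof. unfold cosh. pose proof (eprod u). pose proof (exp_pos u). pose proof (exp_pos (-u)).
  assert (0 <= (exp u - 1) * (exp u - 1)) by (pose proof (Rle_0_sqr (exp u - 1)); unfold Rsqr in *; lra).
  assert (2 <= exp u + exp (-u)). { 
   apply Rmult_le_reg_r with (exp u); [lra|]. rewrite Rmult_plus_distr_r. rewrite (Rmult_comm (exp (-u))). rewrite eprod. nra. } lra. Qed.

Lemma sh_ge0 u : 0 <= u -> 0 <= sinh u.
Proof. intros. unfold sinh. assert (exp (-u) <= exp u) by (destruct (Req_dec u 0) as [->|Hn]; [rewrite Ropp_0; lra | left; apply exp_increasing; lra]). lra. Qed.

Lemma sh_ge u : 0 <= u -> u <= sinh u.
Proof. intros Hu.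
  assert (sinh 0 - 0 <= sinh u - u).
  { apply (mono (fun t => sinh t - t) (fun t => cosh t - 1)); auto.
    - intros x _. unfold sinh, cosh. auto_derive; auto. field.
    - intros x _. pose proof (ch_ge1 x). lra. }
  rewrite sinh_0 in H. lra.
Qed.

Lemma ch_ge u : 0 <= u -> u * u / 2 <= cosh u - 1.
Proof. intros Hu.
  assert (cosh 0 - 1 - 0 * 0 / 2 <= cosh u - 1 - u * u / 2).
  { apply (mono (fun t => cosh t - 1 - t * t / 2) (fun t => sinh t - t)); auto.
    - intros x _. unfold sinh, cosh. auto_derive; auto. field.
    - intros x Hx. pose proof (sh_ge x). lra. }
  unfold cosh in H at 1. rewrite Ropp_0, exp_0 in H. lra.
Qed.

Lemma chi_ge u : 0 <= u -> 0 <= u * cosh u - sinh u.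
Proof. intros Hu.
  assert (0 * cosh 0 - sinh 0 <= u * cosh u - sinh u).
  { apply (mono (fun t => t * cosh t - sinh t) (fun t => t * sinh t)); auto.
    - intros x _. unfold sinh, cosh. auto_derive; auto. field.
    - intros x Hx. pose proof (sh_ge0 x). nra. }
  rewrite sinh_0 in H. lra.
Qed.

Lemma psi_ge u : 0 <= u -> 0 <= u * sinh u - 2 * cosh u + 2.
Proof. intros Hu.
  assert (0 * sinh 0 - 2 * cosh 0 + 2 <= u * sinh u - 2 * cosh u + 2).
  { apply (mono (fun t => t * sinh t - 2 * cosh t + 2) (fun t => t * cosh t - sinh t)); auto.
    - intros x _. unfold sinh, cosh. auto_derive; auto. field.
    - intros x Hx. apply chi_ge. lra. }
  unfold cosh in H at 1. rewrite Ropp_0, exp_0 in H. lra.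
Qed.

Lemma ch_pos u : 0 < u -> 0 < cosh u - 1.
Proof. intros. pose proof (ch_ge u). assert (0 < u * u) by nra. lra. Qed.

Lemma h_mono v u : 0 < v -> v <= u ->
  (sinh v - v) / (cosh v - 1) <= (sinh u - u) / (cosh u - 1).
Proof. intros Hv Hvu.
  apply (mono (fun t => (sinh t - t) / (cosh t - 1))
              (fun t => (t * sinh t - 2 * cosh t + 2) / ((cosh t - 1) * (cosh t - 1)))); auto.
  - intros x Hx. pose proof (ch_pos x ltac:(lra)) as Hc. unfold sinh, cosh in *.
    auto_derive.
    + lra.
    + rewrite !exp_Ropp in *. field.
      pose proof (exp_pos x) as Ep.
      assert (exp x * exp x + 1 - exp x * 2 = 2 * exp x * ((exp x + / exp x) / 2 - 1)) as Ee by (field; lra).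
      rewrite Ee. split; [lra|]. apply Rgt_not_eq. apply Rmult_lt_0_compat; lra.
  - intros x Hx. pose proof (ch_pos x ltac:(lra)). pose proof (psi_ge x ltac:(lra)).
    apply Rdiv_le_0_compat; [lra| apply Rmult_lt_0_compat; lra].
Qed.

Lemma ch_mono v u : 0 <= v -> v <= u -> cosh v <= cosh u.
Proof. intros. apply (mono cosh sinh); auto.
  - intros x _. unfold sinh, cosh. auto_derive; auto. field.
  - intros x Hx. apply sh_ge0. lra. Qed.

Lemma core C u1 u2 k1 k2 : 1 <= C -> 0 <= u1 -> 0 < u2 -> 0 < k1 < 1 -> 0 < k2 < 1 ->
  sinh u1 - k1 * u1 <= C * (sinh u2 - k2 * u2) ->
  1 - k2 <= C * (1 - k1) ->
  cosh u1 - 1 <= 4 * C^4 * (cosh u2 - 1).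
Proof. intros HC Hu1 Hu2 Hk1 Hk2 Hy Hs.
  destruct (Rle_or_lt (cosh u1 - 1) (4 * C^4 * (cosh u2 - 1))) as [|Hc]; auto. exfalso.
  set (L := 4 * C^4) in *.
  assert (HL : 2 * C <= L). { unfold L. assert (1 <= C^3) by (rewrite <- (pow1 3); apply pow_incr; lra). simpl. nra. }
  assert (HL1 : 1 <= L) by lra.
  pose proof (ch_pos u2 Hu2) as W2.
  assert (Hu12 : u2 < u1).
  { destruct (Rle_or_lt u1 u2); auto. pose proof (ch_mono u1 u2 Hu1 H). nra. }
  pose proof (ch_pos u1 ltac:(lra)) as W1.
  pose proof (h_mono u2 u1 Hu2 ltac:(lra)) as Hh.
  pose proof (sh_ge u2 ltac:(lra)) as D2.
  pose proof (sh_ge u1 ltac:(lra)) as D1.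
  assert (HD : L * (sinh u2 - u2) <= sinh u1 - u1).
  { set (w1 := cosh u1 - 1) in *. set (w2 := cosh u2 - 1) in *.
    assert (sinh u1 - u1 = (sinh u1 - u1) / w1 * w1) by (field; lra).
    assert (sinh u2 - u2 = (sinh u2 - u2) / w2 * w2) by (field; lra).
    assert (0 <= (sinh u2 - u2) / w2) by (apply Rdiv_le_0_compat; lra).
    rewrite H, H0. 
    apply Rle_trans with ((sinh u2 - u2) / w2 * w1).
    - rewrite <- Rmult_assoc, (Rmult_comm L), Rmult_assoc. apply Rmult_le_compat_l; lra.
    - apply Rmult_le_compat_r; lra. }
  assert (HS : 2 * C^2 * u2 < sinh u1).
  { pose proof (ch_sh u1). pose proof (ch_ge u2 ltac:(lra)).
    assert (sinh u1 * sinh u1 >= 2 * (cosh u1 - 1)) by nra.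
    assert (2 * (cosh u1 - 1) > L * (u2 * u2)) by nra.
    destruct (Rle_or_lt (sinh u1) (2 * C^2 * u2)) as [Hn|]; auto.
    assert (0 <= C^2) by (apply pow_le; lra).
    assert (sinh u1 * sinh u1 <= (2 * C^2 * u2) * (2 * C^2 * u2)) by (apply Rmult_le_compat; lra).
    assert ((2 * C^2 * u2) * (2 * C^2 * u2) = L * (u2 * u2)) by (unfold L; ring). lra. }
  set (s1 := 1 - k1) in *. set (s2 := 1 - k2) in *.
  assert (E1 : sinh u1 - k1 * u1 = s1 * u1 + (sinh u1 - u1)) by (unfold s1; ring).
  assert (E2 : sinh u2 - k2 * u2 = s2 * u2 + (sinh u2 - u2)) by (unfold s2; ring).
  rewrite E1, E2 in Hy.
  assert (s1 * u1 + (sinh u1 - u1) >= s1 / 2 * sinh u1 + (sinh u1 - u1) / 2).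
  { assert (s1 * (sinh u1 - u1) <= 1 * (sinh u1 - u1)) by (apply Rmult_le_compat_r; unfold s1; lra).
    assert (0 <= s1 * u1) by (apply Rmult_le_pos; unfold s1; lra).
    replace (s1 / 2 * sinh u1) with (s1 * u1 / 2 + s1 * (sinh u1 - u1) / 2) by field. lra. }
  assert (s1 / 2 * sinh u1 > s1 / 2 * (2 * C^2 * u2)) by (apply Rmult_lt_compat_l; unfold s1; lra).
  assert (C * s2 * u2 <= s1 * C^2 * u2).
  { replace (s1 * C^2 * u2) with (C * (C * s1) * u2) by ring.
    apply Rmult_le_compat_r; [lra|]. apply Rmult_le_compat_l; lra. }
  assert (C * (sinh u2 - u2) <= L * (sinh u2 - u2) / 2) by nra.
  nra.
Qed.

Lemma G_cosh k u : 0 <= u -> G k (cosh u) = sinh u - k * u.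
Proof. intros Hu. unfold G.
  assert (cosh u ^ 2 - 1 = sinh u * sinh u) by (pose proof (ch_sh u); simpl; lra).
  rewrite H, sqrt_square by (apply sh_ge0; lra).
  replace (cosh u + sinh u) with (exp u) by (unfold cosh, sinh; field).
  rewrite ln_exp. reflexivity.
Qed.

Lemma sol_exists k y : 0 < k < 1 -> 0 < y -> exists u, 0 <= u /\ sinh u - k * u = y.
Proof. intros Hk Hy.
  set (M := y / (1 - k) + 1).
  assert (HM : 0 < M) by (unfold M; assert (0 < y / (1-k)) by (apply Rdiv_lt_0_compat; lra); lra).
  destruct (IVT (fun t => sinh t - k * t - y) 0 M) as [z [Hz Hf]].
  - apply continuity_minus; [apply continuity_minus|apply continuity_const; intros ? ?; reflexivity].
    + apply derivable_continuous, derivable_sinh.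
    + apply continuity_mult; [apply continuity_const; intros ? ?; reflexivity| apply derivable_continuous, derivable_id].
  - exact HM.
  - rewrite sinh_0. lra.
  - pose proof (sh_ge M ltac:(lra)).
    assert ((1 - k) * M = y + (1 - k)) by (unfold M; field; lra). nra.
  - exists z. split; lra.
Qed.

Lemma H_u k y : 0 < k < 1 -> 0 < y -> exists u, 0 < u /\ H k y = cosh u /\ sinh u - k * u = y.
Proof. intros Hk Hy.
  assert (Hex : exists x, 1 <= x /\ G k x = y).
  { destruct (sol_exists k y Hk Hy) as [u [Hu Hs]]. exists (cosh u). split; [apply ch_ge1|].
    rewrite G_cosh; auto. }
  pose proof (epsilon_spec (inhabits 1) (fun x => 1 <= x /\ G k x = y) Hex) as [Hx HG].
  fold (H k y) in Hx, HG. set (x := H k y) in *.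
  set (r := sqrt (x ^ 2 - 1)).
  assert (Hr0 : 0 <= r) by apply sqrt_pos.
  assert (Hr2 : r * r = x ^ 2 - 1) by (apply sqrt_sqrt; simpl; nra).
  set (u := ln (x + r)).
  assert (Eu : exp u = x + r) by (apply exp_ln; lra).
  assert (Emu : exp (- u) = x - r) by (rewrite exp_Ropp, Eu;
     apply (Rmult_eq_reg_l (x + r)); [|lra]; rewrite Rinv_r by lra; simpl in Hr2; nra).
  assert (Hu0 : 0 <= u).
  { destruct (Rle_or_lt 0 u); auto. pose proof (exp_increasing _ _ H). rewrite exp_0 in H0. lra. }
  assert (Hc : cosh u = x) by (unfold cosh; rewrite Eu, Emu; field).
  assert (Hs : sinh u = r) by (unfold sinh; rewrite Eu, Emu; field).
  assert (HG' : r - k * u = y) by (unfold G in HG; exact HG).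
  exists u. split; [|split; auto].
  - destruct Hu0 as [|Hu0]; auto. exfalso. rewrite <- Hu0 in Hs. rewrite sinh_0 in Hs.
    rewrite <- Hs, <- Hu0 in HG'. lra.
  - rewrite Hs. exact HG'.
Qed.

Theorem lemma2p11 (C0 : R) (HC0 : 1 <= C0) :
  exists C1 : R, 1 <= C1 /\
    forall x1 x2 k1 k2 : R,
      0 < x1 -> 0 < x2 -> 0 < k1 < 1 -> 0 < k2 < 1 ->
      / C0 <= x1 / x2 <= C0 ->
      / C0 <= k1 / k2 <= C0 ->
      / C0 <= (1 - k1) / (1 - k2) <= C0 ->
      / C1 <= (H k1 x1 - 1) / (H k2 x2 - 1) <= C1.
Proof.
  assert (HC3 : 1 <= C0^3) by (rewrite <- (pow1 3); apply pow_incr; lra).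
  assert (HL : 1 <= 4 * C0^4) by (simpl in *; nra).
  exists (4 * C0^4). split; [exact HL|].
  intros x1 x2 k1 k2 Hx1 Hx2 Hk1 Hk2 [Ha1 Ha2] _ [Hb1 Hb2].
  destruct (H_u k1 x1 Hk1 Hx1) as [u1 [Hu1 [E1 S1]]].
  destruct (H_u k2 x2 Hk2 Hx2) as [u2 [Hu2 [E2 S2]]].
  rewrite E1, E2.
  assert (P1 : x1 <= C0 * x2).
  { apply (Rmult_le_compat_r x2) in Ha2; [|lra]. unfold Rdiv in Ha2. rewrite Rmult_assoc, Rinv_l in Ha2 by lra. lra. }
  assert (P2 : x2 <= C0 * x1).
  { apply (Rmult_le_compat_r (C0 * x2)) in Ha1; [|nra]. unfold Rdiv in Ha1.
    replace (/ C0 * (C0 * x2)) with x2 in Ha1 by (field; lra).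
    replace (x1 * / x2 * (C0 * x2)) with (C0 * x1) in Ha1 by (field; lra). lra. }
  assert (Q1 : 1 - k1 <= C0 * (1 - k2)).
  { apply (Rmult_le_compat_r (1 - k2)) in Hb2; [|lra]. unfold Rdiv in Hb2. rewrite Rmult_assoc, Rinv_l in Hb2 by lra. lra. }
  assert (Q2 : 1 - k2 <= C0 * (1 - k1)).
  { apply (Rmult_le_compat_r (C0 * (1 - k2))) in Hb1; [|nra]. unfold Rdiv in Hb1.
    replace (/ C0 * (C0 * (1 - k2))) with (1 - k2) in Hb1 by (field; lra).
    replace ((1 - k1) * / (1 - k2) * (C0 * (1 - k2))) with (C0 * (1 - k1)) in Hb1 by (field; lra). lra. }
  pose proof (core C0 u1 u2 k1 k2 HC0 ltac:(lra) Hu2 Hk1 Hk2 ltac:(rewrite S1, S2; lra) Q2) as A1.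
  pose proof (core C0 u2 u1 k2 k1 HC0 ltac:(lra) Hu1 Hk2 Hk1 ltac:(rewrite S1, S2; lra) Q1) as A2.
  pose proof (ch_pos u1 Hu1). pose proof (ch_pos u2 Hu2).
  set (L := 4 * C0^4) in *. set (w1 := cosh u1 - 1) in *. set (w2 := cosh u2 - 1) in *.
  split.
  - apply (Rmult_le_reg_r (L * w2)); [nra|].
    replace (/ L * (L * w2)) with w2 by (field; lra).
    replace (w1 / w2 * (L * w2)) with (L * w1) by (field; lra). lra.
  - apply (Rmult_le_reg_r w2); [lra|].
    replace (w1 / w2 * w2) with w1 by (field; lra). lra.
Qed.
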